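(* Let $\mathbf{k}$ be a field, let $d \geq 1$, let $A = \mathbf{k}^{d}$, and assume that $\mathbf{k}$ has a full set of $d$-th roots of unity (i.e. $d$ distinct $d$-th roots of unity). Let $M$ be a finite-dimensional $\mathbf{k}$-vector space and let $\phi : A \to \mathrm{End}_{\mathbf{k}}(M)$ be a minimal-characteristic morphism. Then $\phi$ is a (unital) $\mathbf{k}$-algebra homomorphism.
   Context: For $a \in A$, let $\overline{\chi}_a(t) \in \mathbf{k}[t]$ denote the minimal polynomial of the left multiplication operator $\mu_L(a) : A \to A$, $x \mapsto ax$, and $\chi_a(t)$ its characteristic polynomial. A $\mathbf{k}$-linear map $\phi : A \to \mathrm{End}_{\mathbf{k}}(M)$ is called a characteristic morphism if $\chi_a(\phi(a)) = 0$ for all $a \in A$, and a minimal-characteristic morphism if moreover $\overline{\chi}_a(\phi(a)) = 0$ for all $a \in A$. *)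

(* Defs.v *)
From HB Require Import structures.
From mathcomp Require Import all_boot all_order all_algebra.
Set Implicit Arguments. Unset Strict Implicit. Unset Printing Implicit Defensive.
Import GRing.Theory.
Local Open Scope ring_scope.

(* The algebra A = k^d, realised on row vectors 'rV[k]_d with componentwise
   product and unit the all-ones vector. *)
Definition prodA (k : fieldType) (d : nat) (a b : 'rV[k]_d) : 'rV[k]_d :=
  \row_i (a 0 i * b 0 i).
Definition oneA (k : fieldType) (d : nat) : 'rV[k]_d := const_mx 1.

(* Matrix (in the standard basis, row-vector convention) of the left
   multiplication operator mu_L(a) : A -> A, x |-> a x. *)
Definition muL (k : fieldType) (d : nat) (a : 'rV[k]_d) : 'M[k]_d :=
  lin1_mx (prodA a).

(* Evaluation of a polynomial at an endomorphism of M = k^n (any n, incl. 0). *)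
Definition peval (k : fieldType) (n : nat) (p : {poly k}) (B : 'M[k]_n) : 'M[k]_n :=
  \sum_(i < size p) p`_i *: B ^+ i.

(* chi_a = characteristic polynomial of mu_L(a); chibar_a = minimal polynomial.
   d = d'.+1 (d >= 1). *)
Definition characteristic_morphism (k : fieldType) (d' n : nat)
  (phi : 'rV[k]_d'.+1 -> 'M[k]_n) : Prop :=
  forall a, peval (char_poly (muL a)) (phi a) = 0.

Definition min_characteristic_morphism (k : fieldType) (d' n : nat)
  (phi : 'rV[k]_d'.+1 -> 'M[k]_n) : Prop :=
  characteristic_morphism phi /\
  forall a, peval (mxminpoly (muL a)) (phi a) = 0.

(* Main.v *)
Require Import Defs.
From HB Require Import structures.
From mathcomp Require Import all_boot all_order all_algebra.
Import GRing.Theory.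
Local Open Scope ring_scope.

Lemma peval_horner (k : fieldType) n (p : {poly k}) (B : 'M[k]_n.+1) :
  peval p B = horner_mx B p.
Proof.
rewrite /peval -[in RHS](coefK p) poly_def linear_sum; apply: eq_bigr => i _.
by rewrite linearZ rmorphXn /= horner_mx_X.
Qed.

Lemma muL_diag (k : fieldType) d (a : 'rV[k]_d) : muL a = diag_mx a.
Proof.
apply/matrixP => i j; rewrite /muL /lin1_mx mxE /prodA !mxE /=.
by rewrite eq_sym; case: eqP => [->|]; rewrite ?mulr1 ?mulr0.
Qed.

Lemma key (k : fieldType) d' n (phi : 'rV[k]_d'.+1 -> 'M[k]_n.+1)
  (h : forall a, peval (mxminpoly (muL a)) (phi a) = 0) (a : 'rV[k]_d'.+1) (p : {poly k}) :
  (forall i, p.[a 0 i] = 0) -> horner_mx (phi a) p = 0.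
Proof.
move=> hp.
have : horner_mx (muL a) p = 0.
  rewrite muL_diag horner_mx_diag; apply/matrixP => i j.
  by rewrite !mxE hp mul0rn.
move/mxminpoly_min/dvdpP => [q ->].
by rewrite rmorphM /= -[horner_mx _ (mxminpoly _)]peval_horner h mulr0.
Qed.

Lemma alg_lemma (k : fieldType) (R : algType k) (P Q : R) (c : k) :
  c != 0 -> c != 1 -> P * P = P -> Q * Q = Q -> (P + Q) * (P + Q) = P + Q ->
  ((P + c *: Q) * (P + c *: Q) - (P + c *: Q)) * (P + c *: Q - c%:A) = 0 ->
  Q * P = 0.
Proof.
move=> c0 c1 hP hQ hPQ hT.
have H : (P+Q)*(P+Q) = P + Q + (P*Q + Q*P).
  by rewrite mulrDl !mulrDr hP hQ [Q * P + Q]addrC addrACA.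
have e1 : P*Q + Q*P = 0 by apply: (@addrI _ (P+Q)); rewrite addr0 -H hPQ.
have H2 : (P + c *: Q) * (P + c *: Q) = P + (c*c) *: Q.
  rewrite mulrDl !mulrDr hP -!scalerAl -!scalerAr hQ scalerA.
  by rewrite [c *: (Q*P) + _]addrC addrACA -scalerDr e1 scaler0 addr0.
have H3 : (P + c *: Q) * (P + c *: Q) - (P + c *: Q) = (c*c - c) *: Q.
  by rewrite H2 opprD addrACA subrr add0r scalerBl.
move: hT; rewrite H3 -scalerAl mulrBr mulrDr -scalerAr hQ mulr_algr addrK.
move/eqP; rewrite scaler_eq0 => /orP [|/eqP //].
have -> : c*c - c = c*(c-1) by rewrite mulrBr mulr1.
by rewrite mulf_eq0 (negPf c0) /= subr_eq0 (negPf c1).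
Qed.
Theorem mainTheorem2 (k : fieldType) (d' : nat)
  (roots : exists s : seq k,
     [/\ uniq s, size s = d'.+1 & all (d'.+1).-unity_root s])
  (n : nat) (phi : {linear 'rV[k]_d'.+1 -> 'M[k]_n})
  (hphi : min_characteristic_morphism phi) :
  (forall a b : 'rV[k]_d'.+1, phi (prodA a b) = phi a *m phi b) /\
  phi (oneA k d'.+1) = 1%:M.
Proof.
case: n phi hphi => [|n] phi hphi.
  by split => [a b|]; rewrite flatmx0 [RHS]flatmx0.
have hk := @key _ _ _ _ hphi.2.
set P := fun i : 'I_d'.+1 => phi (delta_mx 0 i).
have Ephi u : phi u = \sum_i u 0 i *: P i.
  rewrite {1}(row_sum_delta u) linear_sum; apply: eq_bigr => i _.
  by rewrite linearZ.
have idem i : P i * P i = P i.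
  have := hk (delta_mx 0 i) ('X * 'X - 'X).
  rewrite rmorphB rmorphM /= horner_mx_X.
  move=> h; apply/eqP; rewrite -subr_eq0; apply/eqP; apply: h => j.
  by rewrite !hornerE mxE eqxx /=; case: (j == i); rewrite ?mulr1 ?mulr0 subrr.
have orth i j : i != j -> P j * P i = 0.
  move=> nij.
  have [c c0 c1] : exists2 c : k, c != 0 & c != 1.
    case: roots => s [us ss sa].
    case: s us ss sa => [|x [|y s]] //=.
      move=> _ [d0]; move: i j nij; rewrite -d0 => i j.
      by rewrite (ord1 i) (ord1 j).
    move=> /andP [xys _] _ /and3P [ux uy _].
    have nz z : (d'.+1).-unity_root z -> z != 0.
      rewrite unity_rootE => /eqP hz; apply/eqP => z0.
      by move: hz; rewrite z0 expr0n /= => /eqP; rewrite eq_sym oner_eq0.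
    case: (eqVneq x 1) => [x1|x1]; last by exists x => //; apply: nz.
    exists y; first exact: nz.
    by rewrite -x1 eq_sym; move: xys; rewrite inE negb_or => /andP [].
  apply: (@alg_lemma k [the algType k of 'M[k]_n.+1] (P i) (P j) c c0 c1 (idem i) (idem j)).
    have := hk (delta_mx 0 i + delta_mx 0 j) ('X * 'X - 'X).
    rewrite rmorphB rmorphM /= horner_mx_X linearD.
    move=> h; apply/eqP; rewrite -subr_eq0; apply/eqP; apply: h => l.
    rewrite !hornerE !mxE eqxx /=.
    case: (eqVneq l i) => [->|li]; first by rewrite (negPf nij) /= addr0 mulr1 subrr.
    case: (eqVneq l j) => [_|lj] /=; first by rewrite add0r mulr1 subrr.
    by rewrite addr0 mul0r subrr.
  have := hk (delta_mx 0 i + c *: delta_mx 0 j) (('X * 'X - 'X) * ('X - c%:P)).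
  rewrite rmorphM !rmorphB rmorphM /= horner_mx_X !horner_mx_C linearD linearZ.
  rewrite -scalemx1 => h; apply: h => l.
  rewrite !hornerE !mxE eqxx /=.
  case: (eqVneq l i) => [->|li]; first by rewrite (negPf nij) /= mulr0 addr0 mulr1 subrr mul0r.
  case: (eqVneq l j) => [_|lj] /=; first by rewrite mulr1 add0r subrr mulr0.
  by rewrite mulr0 addr0 !mul0r subrr mul0r.
split.
  move=> a b; rewrite mulmxE Ephi (Ephi a) (Ephi b) mulr_suml.
  apply: eq_bigr => i _; rewrite mulr_sumr (bigD1 i) //= big1 ?addr0.
    by rewrite -scalerAl -scalerAr scalerA idem /prodA mxE.
  move=> j nji; rewrite -scalerAl -scalerAr orth ?scaler0 //.
have := hk (oneA k d'.+1) ('X - 1%:P).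
rewrite rmorphB /= horner_mx_X horner_mx_C => h.
apply/eqP; rewrite -subr_eq0; apply/eqP; apply: h => j.
by rewrite hornerXsubC /oneA mxE subrr.
Qed.
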